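(* Let $k\in\mathbb N$ with $k\geq 3$. Then: (i) $f_{i,j}(n)+1=f_{i,j-1}(n)$ for all $n\in\mathbb N$ and all integers $i,j$ with $k-3\leq i\leq k-2$ and $-F(i+1)\geq j\geq 2-F(k)$; (ii) $f_{k-3,1-F(k)}(a(n))+1=f_{k-2,-F(k-1)}(n)$ for all $n\in\mathbb N$; (iii) $f_{k-3,1-F(k)}(b(n))+1=f_{k-3,-F(k-2)}(b(n)+1)$ for all $n\in\mathbb N$; (iv) $f_{k-2,1-F(k)}(n)+1=f_{k-3,-F(k-2)}(a(n)+1)$ for all $n\in\mathbb N$.
   Context: $\mathbb N=\{1,2,\dots\}$, $\varphi=\frac{1+\sqrt5}{2}$, $a(n)=\lfloor n\varphi\rfloor$, $b(n)=\lfloor n\varphi^2\rfloor$. $F$ is the Fibonacci sequence with $F(0)=0$, $F(1)=F(2)=1$, $F(n)=F(n-1)+F(n-2)$. For $i\in\mathbb Z^{\geq 0}$ and $j\in\mathbb Z$, $f_{i,j}(n)=F(i+1)a(n)+F(i)n-j$ for $n\in\mathbb N$ (the sequences $f_{i,j}$ are only defined for $i\ge 0$). *)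

(* Defs.v *)
From Stdlib Require Import Reals ZArith Lia Lra.
Open Scope Z_scope.

(* floor on the reals: Int_part r = up r - 1 satisfies Int_part r <= r < Int_part r + 1 *)
Definition floorR (r : R) : Z := Int_part r.

Definition phi : R := ((1 + sqrt 5) / 2)%R.

Definition a (n : Z) : Z := floorR (IZR n * phi)%R.
Definition b (n : Z) : Z := floorR (IZR n * (phi * phi))%R.

Fixpoint F (n : nat) : Z :=
  match n with
  | O => 0
  | S m => match m with
           | O => 1
           | S p => F m + F p
           end
  end.

Definition fij (i : nat) (j : Z) (n : Z) : Z := F (i + 1) * a n + F i * n - j.

(* Main.v *)
Require Import Defs.
From Stdlib Require Import Reals ZArith Lia Lra Psatz.
Open Scope Z_scope.

Lemma floor_unique (r : R) (z : Z) : (IZR z <= r < IZR z + 1)%R -> floorR r = z.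
Proof.
  intros [H1 H2]. unfold floorR, Int_part.
  assert (up r = z + 1). { symmetry. apply tech_up; rewrite plus_IZR; lra. }
  lia.
Qed.

Lemma floor_spec (r : R) : (IZR (floorR r) <= r < IZR (floorR r) + 1)%R.
Proof. unfold floorR. destruct (base_Int_part r). lra. Qed.

Lemma phi_sq : (phi * phi = phi + 1)%R.
Proof. unfold phi. assert (H := sqrt_sqrt 5 ltac:(lra)). nra. Qed.

Lemma phi_bounds : (1.6 < phi < 1.7)%R.
Proof. unfold phi. assert (H := sqrt_sqrt 5 ltac:(lra)). assert (H0 := sqrt_pos 5).
  split; nra. Qed.

Lemma no_sqrt5 : forall N : nat, forall n p : Z, Z.abs n <= Z.of_nat N -> n <> 0 -> p * p <> 5 * (n * n).
Proof.
  induction N as [|N IH]; intros n p Hn Hn0 Hp; [lia|].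
  assert (Hp5 : p mod 5 = 0).
  { assert (E := Z.div_mod p 5 ltac:(lia)). assert (R := Z.mod_pos_bound p 5 ltac:(lia)).
    set (q := p / 5) in *. set (r := p mod 5) in *.
    assert (p * p = 5 * (5*q*q + 2*q*r) + r*r) by (rewrite E; ring).
    assert ((r*r) mod 5 = 0).
    { replace (r*r) with (p*p - 5*(5*q*q+2*q*r)) by lia. rewrite Hp.
      replace (5 * (n*n) - 5 * (5*q*q+2*q*r)) with ((n*n - (5*q*q+2*q*r))*5) by ring.
      apply Z.mod_mul; lia. }
    assert (r = 0 \/ r = 1 \/ r = 2 \/ r = 3 \/ r = 4) by lia.
    destruct H1 as [->|[->|[->|[->| ->]]]]; simpl in H0; try discriminate; reflexivity. }
  assert (E := Z.div_mod p 5 ltac:(lia)). rewrite Hp5, Z.add_0_r in E.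
  set (q := p / 5) in *.
  assert (Hn2 : n * n = 5 * (q * q)) by (rewrite E in Hp; lia).
  assert (Hn5 : n mod 5 = 0).
  { assert (E2 := Z.div_mod n 5 ltac:(lia)). assert (R := Z.mod_pos_bound n 5 ltac:(lia)).
    set (s := n / 5) in *. set (r := n mod 5) in *.
    assert ((r*r) mod 5 = 0).
    { replace (r*r) with (n*n - 5*(5*s*s+2*s*r)) by (rewrite E2 at 1 2; ring). rewrite Hn2.
      replace (5 * (q*q) - 5 * (5*s*s+2*s*r)) with ((q*q - (5*s*s+2*s*r))*5) by ring.
      apply Z.mod_mul; lia. }
    assert (r = 0 \/ r = 1 \/ r = 2 \/ r = 3 \/ r = 4) by lia.
    destruct H0 as [->|[->|[->|[->| ->]]]]; simpl in H; try discriminate; reflexivity. }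
  assert (E2 := Z.div_mod n 5 ltac:(lia)). rewrite Hn5, Z.add_0_r in E2.
  set (s := n / 5) in *.
  apply (IH s q); try lia.
Qed.

Lemma frac_pos (n : Z) : 1 <= n -> (IZR (a n) < IZR n * phi)%R.
Proof.
  intros Hn. destruct (floor_spec (IZR n * phi)) as [H1 H2]. unfold a.
  destruct (Rle_lt_or_eq_dec _ _ H1) as [H|H]; [exact H|exfalso].
  set (m := floorR (IZR n * phi)) in *.
  unfold phi in H.
  assert (Hs : (IZR n * sqrt 5 = IZR (2*m - n))%R) by (rewrite minus_IZR, mult_IZR; lra).
  assert (Hsq : (IZR n * sqrt 5 * (IZR n * sqrt 5) = IZR (5 * (n*n)))%R).
  { rewrite !mult_IZR. assert (H0 := sqrt_sqrt 5 ltac:(lra)). nra. }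
  rewrite Hs, <- mult_IZR in Hsq. apply eq_IZR in Hsq.
  apply (no_sqrt5 (Z.to_nat (Z.abs n)) n (2*m-n)); lia.
Qed.

Lemma keyA (n : Z) : 1 <= n -> a (a n) = a n + n - 1.
Proof.
  intros Hn. assert (P := frac_pos n Hn). destruct (floor_spec (IZR n * phi)) as [H1 H2].
  fold (a n) in H1, H2. assert (B := phi_bounds). assert (S := phi_sq).
  set (t := (IZR n * phi - IZR (a n))%R).
  assert (E : (IZR (a n) * phi = IZR n + IZR (a n) + t * (1 - phi))%R).
  { assert (Ha : IZR (a n) = (IZR n * phi - t)%R) by (unfold t; ring).
    rewrite Ha at 1. replace ((IZR n * phi - t) * phi)%R with (IZR n * (phi*phi) - t*phi)%R by ring.
    rewrite S. unfold t. ring. }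
  unfold a at 1. apply floor_unique. rewrite E, !minus_IZR, plus_IZR.
  assert (0 < t < 1)%R by (unfold t; lra). nra.
Qed.

Lemma keyC (n : Z) : 1 <= n -> a (a n + 1) = a n + n + 1.
Proof.
  intros Hn. assert (P := frac_pos n Hn). destruct (floor_spec (IZR n * phi)) as [H1 H2].
  fold (a n) in H1, H2. assert (B := phi_bounds). assert (S := phi_sq).
  set (t := (IZR n * phi - IZR (a n))%R).
  assert (E : (IZR (a n + 1) * phi = IZR n + IZR (a n) + t * (1 - phi) + phi)%R).
  { rewrite plus_IZR. assert (Ha : IZR (a n) = (IZR n * phi - t)%R) by (unfold t; ring).
    rewrite Ha at 1. replace ((IZR n * phi - t + 1) * phi)%R with (IZR n * (phi*phi) - t*phi + phi)%R by ring.
    rewrite S. unfold t. ring. }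
  unfold a at 1. apply floor_unique. rewrite E, !plus_IZR.
  assert (0 < t < 1)%R by (unfold t; lra). nra.
Qed.

Lemma keyb (n : Z) : 1 <= n -> b n = n + a n.
Proof.
  intros Hn. destruct (floor_spec (IZR n * phi)) as [H1 H2].
  fold (a n) in H1, H2. assert (S := phi_sq).
  unfold b. apply floor_unique. rewrite S, plus_IZR. lra.
Qed.

Lemma keyB (n : Z) : 1 <= n -> a (b n + 1) = a (b n) + 1.
Proof.
  intros Hn. rewrite keyb by lia.
  destruct (floor_spec (IZR n * phi)) as [H1 H2].
  fold (a n) in H1, H2. assert (B := phi_bounds). assert (S := phi_sq).
  set (t := (IZR n * phi - IZR (a n))%R).
  assert (0 <= t < 1)%R by (unfold t; lra).
  assert (Ha : IZR (a n) = (IZR n * phi - t)%R) by (unfold t; ring).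
  assert (E : (IZR (n + a n) * phi = IZR n + 2 * IZR (a n) + t * (2 - phi))%R).
  { rewrite plus_IZR. rewrite Ha at 1.
    replace ((IZR n + (IZR n * phi - t)) * phi)%R with (IZR n * phi + IZR n * (phi*phi) - t*phi)%R by ring.
    rewrite S. unfold t. ring. }
  assert (E1 : a (n + a n) = n + 2 * a n).
  { unfold a at 1. apply floor_unique. rewrite E, plus_IZR, mult_IZR. nra. }
  rewrite E1. unfold a at 1. apply floor_unique.
  rewrite plus_IZR, (plus_IZR (n + a n)), Rmult_plus_distr_r, E, !plus_IZR, mult_IZR. nra.
Qed.

Theorem theorem3p8 (k : nat) (hk : (3 <= k)%nat) :
  (forall (n : Z) (i : nat) (j : Z), 1 <= n ->
     (k - 3 <= i <= k - 2)%nat ->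
     2 - F k <= j <= - F (i + 1) ->
     fij i j n + 1 = fij i (j - 1) n) /\
  (forall n : Z, 1 <= n ->
     fij (k - 3) (1 - F k) (a n) + 1 = fij (k - 2) (- F (k - 1)) n) /\
  (forall n : Z, 1 <= n ->
     fij (k - 3) (1 - F k) (b n) + 1 = fij (k - 3) (- F (k - 2)) (b n + 1)) /\
  (forall n : Z, 1 <= n ->
     fij (k - 2) (1 - F k) n + 1 = fij (k - 3) (- F (k - 2)) (a n + 1)).
Proof.
  split. { intros. unfold fij. ring. }
  destruct k as [|[|[|m]]]; try lia.
  replace (S (S (S m)) - 3)%nat with m by lia.
  replace (S (S (S m)) - 2)%nat with (S m) by lia.
  replace (S (S (S m)) - 1)%nat with (S (S m)) by lia.
  replace (m + 1)%nat with (S m) by lia.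
  replace (S m + 1)%nat with (S (S m)) by lia.
  assert (F3 : F (S (S (S m))) = F (S (S m)) + F (S m)) by reflexivity.
  assert (F2 : F (S (S m)) = F (S m) + F m) by (destruct m; reflexivity).
  unfold fij. replace (S m + 1)%nat with (S (S m)) by lia.
  replace (m + 1)%nat with (S m) by lia.
  split; [|split]; intros n Hn.
  - rewrite keyA by lia. rewrite F3, F2. ring.
  - rewrite keyB by lia. rewrite F3, F2. ring.
  - rewrite keyC by lia. rewrite F3, F2. ring.
Qed.
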